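(* Let $0<q<1$, let $\mu,\nu\in\mathbb{R}$ and $\alpha,\beta\in\mathbb{C}$. Let $V$ be the vector space of formal (possibly infinite) linear combinations $\sum_{m\ge 0} c_m \xi_m$ of symbols $\xi_0,\xi_1,\xi_2,\dots$, and define linear operators $A_\pm$ on $V$ (acting termwise) by $$A_+\xi_n=-q^{-(n+1)/2}\,\xi_{n+1},\qquad A_-\xi_n=q^{n/2+1}\,\frac{1-q^{-n}}{1-q}\,\xi_{n-1}$$ (so $A_-\xi_0=0$). Let $$U^{(\mu,\nu)}(\alpha,\beta)=E_q^{(\mu)}\big((1-q)\alpha A_+\big)\,E_q^{(\nu)}\Big(\frac{\beta}{q}(1-q)A_-\Big),\qquad E_q^{(\mu)}(X)=\sum_{k=0}^\infty\frac{q^{\mu k^2}}{(q;q)_k}X^k .$$ Then for every $n\ge 0$ one has $U^{(\mu,\nu)}(\alpha,\beta)\,\xi_n=\sum_{m=0}^\infty U^{(\mu,\nu)}_{m,n}(\alpha,\beta)\,\xi_m$ with $$U^{(\mu,\nu)}_{m,n}(\alpha,\beta)=(-\beta)^{n-m}q^{(n-m)[(\nu+1/4)(n-m)-n/2-1/4]}\begin{bmatrix} n\\ m\end{bmatrix}_q\,\mathcal{P}_m^{(\mu,\nu)}\big(-(1-q)\alpha\beta;q^{n-m}\,\big|\,q\big)\quad\text{if } m\le n,$$ $$U^{(\mu,\nu)}_{m,n}(\alpha,\beta)=\frac{[-(1-q)\alpha]^{m-n}}{(q;q)_{m-n}}\,q^{(m-n)[(\mu-1/4)(m-n)-n/2-1/4]}\,\mathcal{P}_n^{(\nu,\mu)}\big(-(1-q)\alpha\beta;q^{m-n}\,\big|\,q\big)\quad\text{if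 } m\ge n .$$
   Context: $(a;q)_0=1$, $(a;q)_k=\prod_{j=0}^{k-1}(1-aq^j)$; $\begin{bmatrix} n\\ k\end{bmatrix}_q=\frac{(q;q)_n}{(q;q)_k(q;q)_{n-k}}$. For a nonnegative integer $\gamma$ and real $\mu,\nu$, the polynomial $\mathcal{P}_n^{(\mu,\nu)}$ is $$\mathcal{P}_n^{(\mu,\nu)}(x;q^\gamma|q)=\sum_{k=0}^n\frac{q^{k^2(\mu+\nu)+2\nu\gamma k}\,(q^{-n};q)_k}{(q;q)_k\,(q^{\gamma+1};q)_k}\,x^k .$$ Applying $U^{(\mu,\nu)}(\alpha,\beta)$ to $\xi_n$: the $A_-$ factor produces a finite combination, and the $A_+$ factor then produces a formal series in $V$ each of whose coefficients is a finite sum. The operators $A_\pm$ (together with $K\xi_n=q^{-n/2}\xi_n$) give a representation of the $q$-oscillator algebra $A_-A_+-q^{-1}A_+A_-=1$. *)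

(* Defs.v *)
From Stdlib Require Import Reals.
From Coquelicot Require Import Coquelicot.
Open Scope R_scope.

(* Formal (possibly infinite) combinations sum_m c_m xi_m, as coefficient
   sequences m |-> c_m. *)
Definition vec := nat -> C.

Definition xi (n : nat) : vec := fun m => if Nat.eqb m n then RtoC 1 else RtoC 0.

(* A_+ xi_n = - q^{-(n+1)/2} xi_{n+1}, extended termwise *)
Definition Aplus (q : R) (v : vec) : vec := fun m =>
  match m with
  | O => RtoC 0
  | S m' => Cmult (RtoC (- Rpower q (- (INR m' + 1) / 2))) (v m')
  end.

(* A_- xi_n = q^{n/2+1} (1 - q^{-n})/(1-q) xi_{n-1}  (A_- xi_0 = 0), termwise *)
Definition Aminus (q : R) (v : vec) : vec := fun m =>
  Cmult (RtoC (Rpower q (INR (S m) / 2 + 1) * (1 - Rpower q (- INR (S m))) / (1 - q)))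
        (v (S m)).

Fixpoint qpoch (a q : R) (k : nat) : R :=
  match k with
  | O => 1
  | S k' => qpoch a q k' * (1 - a * q ^ k')
  end.

Definition qbinom (q : R) (n k : nat) : R :=
  qpoch q q n / (qpoch q q k * qpoch q q (n - k)).

Definition Ecoef (mu q : R) (k : nat) : R := Rpower q (mu * INR k ^ 2) / qpoch q q k.

(* Coefficient of xi_m in U^{(mu,nu)}(alpha,beta) xi_n, where
   U = E_q^{(mu)}((1-q) alpha A_+) E_q^{(nu)}((beta/q)(1-q) A_-).
   The k-sum (A_- part) is truncated at n since A_-^k xi_n = 0 for k > n;
   the j-sum (A_+ part) is truncated at m since A_+^j raises the minimal
   index of the support by j, so terms with j > m have zero m-th coefficient.
   Hence this is exactly the (finite) m-th coefficient of the formal series. *)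
Definition Ucoef (q mu nu : R) (alpha beta : C) (m n : nat) : C :=
  sum_n (fun j =>
    sum_n (fun k =>
      Cmult (Cmult (Cmult (RtoC (Ecoef mu q j)) (pow_n (Cmult (RtoC (1 - q)) alpha) j))
                   (Cmult (RtoC (Ecoef nu q k))
                          (pow_n (Cmult (Cdiv beta (RtoC q)) (RtoC (1 - q))) k)))
            (Nat.iter j (Aplus q) (Nat.iter k (Aminus q) (xi n)) m)) n) m.

Definition Pcal (mu nu q : R) (gamma n : nat) (x : C) : C :=
  sum_n (fun k =>
    Cmult (RtoC (Rpower q (INR k ^ 2 * (mu + nu) + 2 * nu * INR gamma * INR k)
                 * qpoch (Rpower q (- INR n)) q k
                 / (qpoch q q k * qpoch (q ^ (gamma + 1)) q k)))
          (pow_n x k)) n.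

(* Main.v *)
Require Import Defs.
From Stdlib Require Import Reals Lia Lra FunctionalExtensionality.
From Coquelicot Require Import Coquelicot.
Open Scope R_scope.

Lemma P_pos q x : 0 < Rpower q x.
Proof. unfold Rpower. apply exp_pos. Qed.

Lemma P_neq q x : Rpower q x <> 0.
Proof. apply Rgt_not_eq, P_pos. Qed.

Lemma P_mul q a b : Rpower q a * Rpower q b = Rpower q (a + b).
Proof. now rewrite Rpower_plus. Qed.

Lemma P_eq q a b : a = b -> Rpower q a = Rpower q b.
Proof. intros ->; reflexivity. Qed.



Lemma P_zero q : Rpower q 0 = 1.
Proof. unfold Rpower. rewrite Rmult_0_l. apply exp_0. Qed.

Lemma P_opp q a : Rpower q (- a) * Rpower q a = 1.
Proof. rewrite P_mul. replace (-a + a) with 0 by ring. apply P_zero. Qed.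

Lemma pow_P q k : 0 < q -> q ^ k = Rpower q (INR k).
Proof. intros. now rewrite Rpower_pow. Qed.

Lemma Q_pos q k : 0 < q < 1 -> 0 < qpoch q q k.
Proof.
  intros Hq. induction k as [|k IH]; simpl; [lra|].
  apply Rmult_lt_0_compat; auto.
  assert (q * q ^ k < 1).
  { change (q * q ^ k) with (q ^ S k). apply pow_lt_1_compat; [lra|lia]. }
  lra.
Qed.

Lemma Q_neq q k : 0 < q < 1 -> qpoch q q k <> 0.
Proof. intros; apply Rgt_not_eq, Q_pos; auto. Qed.

Lemma qpoch_shift q d i :
  qpoch q q d * qpoch (q ^ (d + 1)) q i = qpoch q q (d + i).
Proof.
  induction i as [|i IH].
  - rewrite Nat.add_0_r; cbn [qpoch]; ring.
  - remember (d + 1)%nat as e. rewrite (Nat.add_succ_r d i). cbn [qpoch].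
    rewrite <- IH. subst e. rewrite !pow_add. simpl. ring.
Qed.

Lemma one_minus_Pneg q y : 1 - Rpower q (- y) = - Rpower q (- y) * (1 - Rpower q y).
Proof. replace (- Rpower q (-y) * (1 - Rpower q y)) with (- Rpower q (-y) + Rpower q (-y) * Rpower q y) by ring.
  rewrite P_opp. ring. Qed.

Lemma L3 q N i : 0 < q < 1 -> (i <= N)%nat ->
  qpoch (Rpower q (- INR N)) q i * qpoch q q (N - i) =
  (-1) ^ i * Rpower q (INR i * (INR i - 1) / 2 - INR i * INR N) * qpoch q q N.
Proof.
  intros Hq. induction i as [|i IH]; intros Hi.
  - rewrite Nat.sub_0_r. replace (INR 0 * (INR 0 - 1) / 2 - INR 0 * INR N) with 0 by (simpl; field).
    rewrite P_zero. simpl. ring.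
  - destruct (Nat.le_exists_sub (S i) N Hi) as [r [HN _]].
    assert (E1 : (N - i = S r)%nat) by lia.
    assert (E2 : (N - S i = r)%nat) by lia.
    rewrite E1 in IH. rewrite E2. specialize (IH ltac:(lia)).
    simpl qpoch in *. 
    assert (H1 : Rpower q (- INR N) * q ^ i = Rpower q (- (INR r + 1))).
    { rewrite pow_P by lra. rewrite P_mul. apply P_eq. subst N.
      rewrite plus_INR, S_INR. ring. }
    assert (H2 : q * q ^ r = Rpower q (INR r + 1)).
    { change (q * q ^ r) with (q ^ S r). rewrite pow_P by lra. now rewrite S_INR. }
    rewrite H1, one_minus_Pneg, <- H2.
    transitivity (qpoch (Rpower q (- INR N)) q i * (qpoch q q r * (1 - q * q ^ r)) * (- Rpower q (- (INR r + 1)))).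
    { ring. }
    rewrite IH. rewrite S_INR.
    replace ((INR i + 1) * (INR i + 1 - 1) / 2 - (INR i + 1) * INR N) with
      ((INR i * (INR i - 1) / 2 - INR i * INR N) + (- (INR r + 1))).
    2:{ subst N. rewrite plus_INR, S_INR. field. }
    rewrite <- P_mul. simpl. ring.
Qed.

Definition aA q (p : nat) : R := Rpower q (INR p / 2 + 1) * (1 - Rpower q (- INR p)) / (1 - q).
Fixpoint cm q n k := match k with O => 1 | S k' => cm q n k' * aA q (n - k') end.
Fixpoint cp q p j := match j with O => 1 | S j' => cp q p j' * (- Rpower q (- (INR (p + j') + 1) / 2)) end.

Lemma iter_Aplus q j p c m :
  Nat.iter j (Aplus q) (fun m => if Nat.eqb m p then c else RtoC 0) m =
  if Nat.eqb m (p + j) then Cmult (RtoC (cp q p j)) c else RtoC 0.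
Proof.
  revert m. induction j as [|j IH]; intros m.
  - rewrite Nat.add_0_r. simpl. destruct (Nat.eqb m p); [ring|reflexivity].
  - rewrite Nat.iter_succ. unfold Aplus at 1. destruct m as [|m'].
    + replace (Nat.eqb 0 (p + S j)) with false by (symmetry; apply Nat.eqb_neq; lia). reflexivity.
    + rewrite IH. rewrite Nat.add_succ_r. cbn [Nat.eqb].
      destruct (Nat.eqb m' (p + j)) eqn:E.
      * apply Nat.eqb_eq in E. subst m'. cbn [cp]. rewrite RtoC_mult. ring.
      * ring.
Qed.

Lemma iter_Aminus q k n m : (k <= n)%nat ->
  Nat.iter k (Aminus q) (xi n) m = if Nat.eqb m (n - k) then RtoC (cm q n k) else RtoC 0.
Proof.
  revert m. induction k as [|k IH]; intros m Hk.
  - simpl. rewrite Nat.sub_0_r. unfold xi. destruct (Nat.eqb m n); reflexivity.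
  - rewrite Nat.iter_succ. unfold Aminus at 1. rewrite IH by lia.
    destruct (Nat.le_exists_sub (S k) n Hk) as [r [Hn _]].
    replace (n - k)%nat with (S r) by lia. replace (n - S k)%nat with r by lia.
    cbn [Nat.eqb]. destruct (Nat.eqb m r) eqn:E.
    + apply Nat.eqb_eq in E. subst m. cbn [cm]. replace (n - k)%nat with (S r) by lia.
      rewrite RtoC_mult. unfold aA. apply Cmult_comm.
    + apply Cmult_0_r.
Qed.

Lemma cp_closed q p j : cp q p j = (-1) ^ j * Rpower q (- (INR j * INR p + INR j * (INR j + 1) / 2) / 2).
Proof.
  induction j as [|j IH].
  - simpl. replace (- (0 * INR p + 0 * (0 + 1) / 2) / 2) with 0 by field. rewrite P_zero. ring.
  - cbn [cp]. rewrite IH. 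
    transitivity ((-1) ^ S j * (Rpower q (- (INR j * INR p + INR j * (INR j + 1) / 2) / 2) * Rpower q (- (INR (p + j) + 1) / 2))).
    { simpl. ring. }
    rewrite P_mul. f_equal. apply P_eq. rewrite plus_INR, S_INR. field.
Qed.

Lemma cm_closed q n k : 0 < q < 1 -> (k <= n)%nat ->
  cm q n k = (-1) ^ k * Rpower q (INR k - (INR k * INR n - INR k * (INR k - 1) / 2) / 2)
             * (qpoch q q n / qpoch q q (n - k)) / (1 - q) ^ k.
Proof.
  intros Hq. induction k as [|k IH]; intros Hk.
  - simpl. rewrite Nat.sub_0_r. replace (0 - (0 * INR n - 0 * (0 - 1) / 2) / 2) with 0 by field.
    rewrite P_zero. field. apply Q_neq; auto.
  - destruct (Nat.le_exists_sub (S k) n Hk) as [r [Hn _]].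
    cbn [cm]. rewrite IH by lia.
    replace (n - k)%nat with (S r) by lia. replace (n - S k)%nat with r by lia.
    unfold aA. rewrite one_minus_Pneg.
    cbn [qpoch]. 
    assert (H2 : q * q ^ r = Rpower q (INR (S r))).
    { change (q * q ^ r) with (q ^ S r). rewrite pow_P by lra. reflexivity. }
    rewrite H2.
    assert (Hx : 1 - Rpower q (INR (S r)) <> 0).
    { rewrite <- H2. change (q * q ^ r) with (q ^ S r).
      assert (q ^ S r < 1) by (apply pow_lt_1_compat; [lra|lia]). lra. }
    assert (Hq1 : 1 - q <> 0) by lra.
    pose proof (Q_neq q r Hq).
    transitivity ((-1) ^ S k * (Rpower q (INR k - (INR k * INR n - INR k * (INR k - 1) / 2) / 2) *
       Rpower q (INR (S r) / 2 + 1) * Rpower q (- INR (S r))) * (qpoch q q n / qpoch q q r) / (1 - q) ^ S k).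
    { cbn [pow]. field. repeat split; auto using pow_nonzero. }
    rewrite !P_mul. f_equal. f_equal. f_equal. apply P_eq.
    subst n. rewrite !plus_INR, !S_INR. field.
Qed.

Lemma swap3 x y z : x * (y * z) = y * (x * z). Proof. ring. Qed.

Ltac pullP q := repeat match goal with
 | |- context [Rpower q ?a * (Rpower q ?b * ?y)] => rewrite <- (Rmult_assoc (Rpower q a)), (P_mul q a b)
 | |- context [Rpower q ?a * Rpower q ?b] => rewrite (P_mul q a b)
 | |- context [?x * (Rpower q ?a * ?y)] => lazymatch x with Rpower _ _ => fail | _ => rewrite (swap3 x (Rpower q a) y) end
 | |- context [?x * Rpower q ?a] => lazymatch x with Rpower _ _ => fail | _ => rewrite (Rmult_comm x (Rpower q a)) end
 end.

Lemma L3' q N i : 0 < q < 1 -> (i <= N)%nat ->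
  qpoch (Rpower q (- INR N)) q i =
  (-1) ^ i * Rpower q (INR i * (INR i - 1) / 2 - INR i * INR N) * qpoch q q N / qpoch q q (N - i).
Proof.
  intros Hq Hi. rewrite <- L3 by auto. field. apply Q_neq; auto.
Qed.

Lemma qshift' q d i : 0 < q < 1 ->
  qpoch (q ^ (d + 1)) q i = qpoch q q (d + i) / qpoch q q d.
Proof.
  intros Hq. rewrite <- qpoch_shift. field. apply Q_neq; auto.
Qed.

Lemma invpow q k : 0 < q -> (/ q) ^ k = Rpower q (- INR k).
Proof. intros. rewrite Rpower_Ropp, Rpower_pow by auto. now rewrite pow_inv. Qed.

Lemma real1 q mu nu m d i : 0 < q < 1 -> (i <= m)%nat ->
  Ecoef mu q i * (1-q)^i * (Ecoef nu q (d+i) * ((/q)^(d+i) * (1-q)^(d+i))) * (cp q (m-i) i * cm q (m+d) (d+i))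
  = (-1)^d * Rpower q (INR d * ((nu + 1/4) * INR d - INR (m+d)/2 - 1/4)) * qbinom q (m+d) m
    * (Rpower q (INR i ^ 2 * (mu + nu) + 2 * nu * INR d * INR i) * qpoch (Rpower q (- INR m)) q i
       / (qpoch q q i * qpoch (q ^ (d + 1)) q i)) * ((-1)^i * (1-q)^i).
Proof.
  intros Hq Hi. destruct (Nat.le_exists_sub i m Hi) as [a [Hm _]]. subst m.
  replace (a + i - i)%nat with a by lia.
  unfold Ecoef, qbinom. rewrite cp_closed, cm_closed by (auto; lia).
  replace (a + i + d - (d + i))%nat with a by lia.
  replace (a + i + d - (a + i))%nat with d by lia.
  rewrite L3' by (auto; lia). replace (a + i - i)%nat with a by lia.
  rewrite qshift' by auto. rewrite invpow by lra. rewrite !pow_add.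
  pose proof (Q_neq q a Hq). pose proof (Q_neq q i Hq). pose proof (Q_neq q d Hq).
  pose proof (Q_neq q (d+i) Hq). pose proof (Q_neq q (a+i) Hq). pose proof (Q_neq q (a+i+d) Hq).
  assert (1 - q <> 0) by lra.
  unfold Rdiv. rewrite ?Rinv_mult. rewrite ?Rmult_assoc.
  pullP q.
  match goal with |- Rpower q ?a * ?l = Rpower q ?b * ?r => replace b with a; [apply Rmult_eq_compat_l|] end.
  - field. repeat split; auto using pow_nonzero.
  - rewrite !plus_INR. field.
Qed.

Lemma real2 q mu nu n e i : 0 < q < 1 -> (i <= n)%nat ->
  Ecoef mu q (e+i) * (1-q)^(e+i) * (Ecoef nu q i * ((/q)^i * (1-q)^i)) * (cp q (n-i) (e+i) * cm q n i)
  = (-1)^e * (1-q)^e * / qpoch q q e * Rpower q (INR e * ((mu - 1/4) * INR e - INR n / 2 - 1/4))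
    * (Rpower q (INR i ^ 2 * (nu + mu) + 2 * mu * INR e * INR i) * qpoch (Rpower q (- INR n)) q i
       / (qpoch q q i * qpoch (q ^ (e + 1)) q i)) * ((-1)^i * (1-q)^i).
Proof.
  intros Hq Hi. destruct (Nat.le_exists_sub i n Hi) as [a [Hm _]]. subst n.
  replace (a + i - i)%nat with a by lia.
  unfold Ecoef. rewrite cp_closed, cm_closed by (auto; lia).
  rewrite L3' by (auto; lia). replace (a + i - i)%nat with a by lia.
  rewrite qshift' by auto. rewrite invpow by lra. rewrite !pow_add.
  pose proof (Q_neq q a Hq). pose proof (Q_neq q i Hq). pose proof (Q_neq q e Hq).
  pose proof (Q_neq q (e+i) Hq). pose proof (Q_neq q (a+i) Hq).
  assert (1 - q <> 0) by lra.
  unfold Rdiv. rewrite ?Rinv_mult. rewrite ?Rmult_assoc.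
  pullP q.
  match goal with |- Rpower q ?a * ?l = Rpower q ?b * ?r => replace b with a; [apply Rmult_eq_compat_l|] end.
  - field. repeat split; auto using pow_nonzero.
  - rewrite !plus_INR. field.
Qed.

Ltac toC := match goal with |- @eq _ ?a ?b => change (@eq C a b) end.

Lemma powS (z : C) k : pow_n z (S k) = Cmult z (pow_n z k).
Proof. reflexivity. Qed.
Lemma pow0 (z : C) : pow_n z 0 = RtoC 1.
Proof. reflexivity. Qed.

Lemma powC_mult (z w : C) k : pow_n (Cmult z w) k = Cmult (pow_n z k) (pow_n w k).
Proof. induction k as [|k IH]. - rewrite !pow0. toC. ring. - rewrite !powS, IH. toC. ring. Qed.

Lemma powC_R r k : pow_n (RtoC r) k = RtoC (r ^ k).
Proof. induction k as [|k IH]. - reflexivity. - rewrite powS, IH. simpl. now rewrite RtoC_mult. Qed.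

Lemma powC_plus (z : C) a b : pow_n z (a + b) = Cmult (pow_n z a) (pow_n z b).
Proof. induction a as [|a IH]. - rewrite Nat.add_0_l, pow0. symmetry; apply Cmult_1_l. - rewrite Nat.add_succ_l, !powS, IH. toC. ring. Qed.

Lemma Copp_m1 (z : C) : Copp z = Cmult (RtoC (-1)) z.
Proof. ring. Qed.

Lemma Cinv_R r : r <> 0 -> Cinv (RtoC r) = RtoC (/ r).
Proof. intros H. unfold Cinv, RtoC. simpl. f_equal; field; auto. Qed.

Lemma Cdiv_R (z : C) r : r <> 0 -> Cdiv z (RtoC r) = Cmult z (RtoC (/ r)).
Proof. intros H. unfold Cdiv. now rewrite Cinv_R. Qed.

Lemma term1 q mu nu (al be : C) m d i : 0 < q < 1 -> (i <= m)%nat ->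
Cmult (Cmult (Cmult (RtoC (Ecoef mu q i)) (pow_n (Cmult (RtoC (1 - q)) al) i))
             (Cmult (RtoC (Ecoef nu q (d+i))) (pow_n (Cmult (Cdiv be (RtoC q)) (RtoC (1 - q))) (d+i))))
      (Cmult (RtoC (cp q (m-i) i)) (RtoC (cm q (m+d) (d+i))))
= Cmult (Cmult (Cmult (pow_n (Copp be) d) (RtoC (Rpower q (INR d * ((nu + 1/4) * INR d - INR (m+d)/2 - 1/4))))) (RtoC (qbinom q (m+d) m)))
        (Cmult (RtoC (Rpower q (INR i ^ 2 * (mu + nu) + 2 * nu * INR d * INR i) * qpoch (Rpower q (- INR m)) q i / (qpoch q q i * qpoch (q ^ (d + 1)) q i))) (pow_n (Copp (Cmult (Cmult (RtoC (1 - q)) al) be)) i)).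
Proof.
  intros Hq Hi.
  rewrite Cdiv_R by lra. rewrite !Copp_m1. rewrite !powC_mult. rewrite !powC_R.
  rewrite (powC_plus be d i).
  transitivity (Cmult (RtoC (Ecoef mu q i * (1-q)^i * (Ecoef nu q (d+i) * ((/q)^(d+i) * (1-q)^(d+i))) * (cp q (m-i) i * cm q (m+d) (d+i))))
     (Cmult (pow_n al i) (Cmult (pow_n be d) (pow_n be i)))).
  { rewrite !RtoC_mult. toC. ring. }
  rewrite real1 by auto.
  rewrite !RtoC_mult. toC. ring.
Qed.

Lemma term2 q mu nu (al be : C) n e i : 0 < q < 1 -> (i <= n)%nat ->
Cmult (Cmult (Cmult (RtoC (Ecoef mu q (e+i))) (pow_n (Cmult (RtoC (1 - q)) al) (e+i)))
             (Cmult (RtoC (Ecoef nu q i)) (pow_n (Cmult (Cdiv be (RtoC q)) (RtoC (1 - q))) i)))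
      (Cmult (RtoC (cp q (n-i) (e+i))) (RtoC (cm q n i)))
= Cmult (Cmult (Cdiv (pow_n (Copp (Cmult (RtoC (1 - q)) al)) e) (RtoC (qpoch q q e)))
               (RtoC (Rpower q (INR e * ((mu - 1 / 4) * INR e - INR n / 2 - 1 / 4)))))
        (Cmult (RtoC (Rpower q (INR i ^ 2 * (nu + mu) + 2 * mu * INR e * INR i) * qpoch (Rpower q (- INR n)) q i / (qpoch q q i * qpoch (q ^ (e + 1)) q i))) (pow_n (Copp (Cmult (Cmult (RtoC (1 - q)) al) be)) i)).
Proof.
  intros Hq Hi.
  rewrite !Cdiv_R by (try lra; apply Q_neq; auto). rewrite !Copp_m1. rewrite !powC_mult. rewrite !powC_R.
  rewrite (powC_plus al e i).
  transitivity (Cmult (RtoC (Ecoef mu q (e+i) * (1-q)^(e+i) * (Ecoef nu q i * ((/q)^i * (1-q)^i)) * (cp q (n-i) (e+i) * cm q n i)))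
     (Cmult (Cmult (pow_n al e) (pow_n al i)) (pow_n be i))).
  { rewrite !RtoC_mult. toC. ring. }
  rewrite real2 by auto.
  rewrite !RtoC_mult. toC. ring.
Qed.

Lemma pzr (x : C) : plus x (RtoC 0) = x.
Proof. exact (Cplus_0_r x). Qed.
Lemma pzl (x : C) : plus (RtoC 0) x = x.
Proof. exact (Cplus_0_l x). Qed.

Lemma sum_zero (g : nat -> C) N : (forall j, (j <= N)%nat -> g j = RtoC 0) -> sum_n g N = RtoC 0.
Proof.
  induction N as [|N IH]; intros H.
  - rewrite sum_O. apply H; lia.
  - rewrite sum_Sn, IH by (intros; apply H; lia). rewrite H by lia.
    apply pzr.
Qed.

Lemma sum_shift (g : nat -> C) e N : (forall j, (j < e)%nat -> g j = RtoC 0) ->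
  sum_n g (e + N) = sum_n (fun i => g (e + i)%nat) N.
Proof.
  intros H. induction N as [|N IH].
  - rewrite sum_O, Nat.add_0_r. destruct e as [|e'].
    + apply sum_O.
    + rewrite sum_Sn, sum_zero by (intros; apply H; lia). apply pzl.
  - rewrite Nat.add_succ_r, !sum_Sn, IH. now rewrite Nat.add_succ_r.
Qed.

Lemma sum_collapse (g : nat -> C) N K :
  sum_n (fun k => if Nat.eqb k K then g k else RtoC 0) N = if Nat.leb K N then g K else RtoC 0.
Proof.
  induction N as [|N IH].
  - rewrite sum_O. destruct K; reflexivity.
  - rewrite sum_Sn, IH.
    destruct (Nat.eqb_spec (S N) K), (Nat.leb_spec K N), (Nat.leb_spec K (S N)); subst; try lia.
    + apply pzl.
    + apply pzr.
    + apply pzr.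
Qed.

Definition Tt q mu nu (al be : C) j k : C :=
  Cmult (Cmult (RtoC (Ecoef mu q j)) (pow_n (Cmult (RtoC (1 - q)) al) j))
        (Cmult (RtoC (Ecoef nu q k)) (pow_n (Cmult (Cdiv be (RtoC q)) (RtoC (1 - q))) k)).

Definition Fterm q mu nu al be n j k : C :=
  Cmult (Tt q mu nu al be j k) (Cmult (RtoC (cp q (n - k) j)) (RtoC (cm q n k))).

Lemma Ucoef_collapse q mu nu al be m n :
  Ucoef q mu nu al be m n =
  sum_n (fun j => if Nat.leb m (n + j) then Fterm q mu nu al be n j (n + j - m) else RtoC 0) m.
Proof.
  unfold Ucoef. apply sum_n_ext_loc. intros j Hj.
  rewrite sum_n_ext_loc with (b := fun k => if Nat.eqb k (n + j - m) then
      (if Nat.leb m (n + j) then Fterm q mu nu al be n j k else RtoC 0) else RtoC 0).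
  - rewrite sum_collapse. replace (Nat.leb (n + j - m) n) with true by (symmetry; apply Nat.leb_le; lia).
    reflexivity.
  - intros k Hk.
    replace (Nat.iter k (Aminus q) (xi n)) with
      (fun m0 => if Nat.eqb m0 (n - k) then RtoC (cm q n k) else RtoC 0)
      by (apply functional_extensionality; intro; symmetry; apply iter_Aminus; lia).
    rewrite iter_Aplus. unfold Fterm, Tt.
    destruct (Nat.eqb_spec m (n - k + j)), (Nat.eqb_spec k (n + j - m)), (Nat.leb_spec m (n + j));
      try lia; try reflexivity; apply Cmult_0_r.
Qed.

Lemma Csum_mult_l (c : C) (u : nat -> C) N :
  Cmult c (sum_n u N) = sum_n (fun k => Cmult c (u k)) N.
Proof. symmetry. exact (sum_n_mult_l c u N). Qed.

Theorem mainTheorem1 (q mu nu : R) (alpha beta : C) :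
  0 < q < 1 ->
  forall n m : nat,
    ((m <= n)%nat ->
      Ucoef q mu nu alpha beta m n =
      Cmult (Cmult (Cmult (pow_n (Copp beta) (n - m))
                          (RtoC (Rpower q (INR (n - m) * ((nu + 1 / 4) * INR (n - m)
                                                         - INR n / 2 - 1 / 4)))))
                   (RtoC (qbinom q n m)))
            (Pcal mu nu q (n - m) m
               (Copp (Cmult (Cmult (RtoC (1 - q)) alpha) beta)))) /\
    ((n <= m)%nat ->
      Ucoef q mu nu alpha beta m n =
      Cmult (Cmult (Cdiv (pow_n (Copp (Cmult (RtoC (1 - q)) alpha)) (m - n))
                         (RtoC (qpoch q q (m - n))))
                   (RtoC (Rpower q (INR (m - n) * ((mu - 1 / 4) * INR (m - n)
                                                  - INR n / 2 - 1 / 4)))))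
            (Pcal nu mu q (m - n) n
               (Copp (Cmult (Cmult (RtoC (1 - q)) alpha) beta)))).
Proof.
  intros Hq n m. split; intro Hle.
  - destruct (Nat.le_exists_sub m n Hle) as [d [Hn _]]. subst n.
    replace (d + m)%nat with (m + d)%nat by lia.
    replace (m + d - m)%nat with d by lia.
    rewrite Ucoef_collapse. unfold Pcal. rewrite Csum_mult_l.
    apply sum_n_ext_loc. intros i Hi.
    replace (Nat.leb m (m + d + i)) with true by (symmetry; apply Nat.leb_le; lia).
    replace (m + d + i - m)%nat with (d + i)%nat by lia.
    unfold Fterm, Tt. replace (m + d - (d + i))%nat with (m - i)%nat by lia.
    apply term1; auto.
  - destruct (Nat.le_exists_sub n m Hle) as [e [Hm _]]. subst m.
    replace (e + n - n)%nat with e by lia.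
    rewrite Ucoef_collapse. unfold Pcal. rewrite Csum_mult_l.
    rewrite sum_shift.
    2:{ intros j Hj. replace (Nat.leb (e + n) (n + j)) with false by (symmetry; apply Nat.leb_gt; lia). reflexivity. }
    apply sum_n_ext_loc. intros i Hi.
    replace (Nat.leb (e + n) (n + (e + i))) with true by (symmetry; apply Nat.leb_le; lia).
    replace (n + (e + i) - (e + n))%nat with i by lia.
    unfold Fterm, Tt. apply term2; auto.
Qed.
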